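(* Let $F:\mathbf{Perf}(A)\to\mathbf{Perf}(A)$ be a fully faithful $k$-linear functor satisfying: $F\circ[1]=[1]\circ F$; $F(X_i[\alpha])=X_i[\alpha]$ for all $i\ge1,\alpha\in\mathbb{Z}$; (C1) $k^i_{i[0]}=1$ for all $i\ge1$; and (C2) $k^{i-1}_{i[0]}=1$ for all $i\ge2$. Put $\lambda=k^2_{1[1]}$. Then for all $i,j\ge1$ and $\alpha\in\mathbb{Z}$ with $-j<\alpha\le\min\{0,i-j\}$ or $\max\{0,i-j\}\le\alpha<i$, one has $k^i_{j[\alpha]}=\lambda^\alpha$. In particular the action of $F$ on morphisms between indecomposable objects is completely determined by $\lambda$.
   Context: $k$ is a field, $A=k[\epsilon]/(\epsilon^2)$, $\mathbf{Perf}(A)$ the homotopy category of bounded complexes of finitely generated free $A$-modules. For $i\ge1$, $X_i$ is the complex with $A$ in degrees $-i,\dots,-1$ and differentials multiplication by $\epsilon$; $X_j[\alpha]$ is modelled as the complex with $A$ in degrees $-j-\alpha,\dots,-1-\alpha$ and differentials $\epsilon$. For $\max\{0,i-j\}\le\alpha<i$ let $1^i_{j[\alpha]}$ be the class of the chain map $X_i\to X_j[\alpha]$ that is the identity in degrees where both are nonzero and $0$ elsewhere; for $-j<\alpha\le\min\{0,i-j\}$ let $\epsilon^i_{j[\alpha]}$ be the class of the chain map that is multiplication by $\epsilon$ in degree $-1$ and $0$ elsewhere. $\mathrm{Hom}(X_i,X_j[\alpha])$ is spanned by the generator when exactly one of these exists; for $i=j$, $\alpha=0$ it has basis $\mathrm{id},\epsilon^i_{i[0]}$.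 The coefficients $k^i_{j[\alpha]}\in k$ of $F$ are defined by: $F(g)=k^i_{j[\alpha]}g$ for $g$ the generator $1^i_{j[\alpha]}$ or $\epsilon^i_{j[\alpha]}$ when $(i-j,\alpha)\ne(0,0)$, and $F(a\,\mathrm{id}+b\,\epsilon^i_{i[0]})=a\,\mathrm{id}+k^i_{i[0]}b\,\epsilon^i_{i[0]}$. *)

(* Defs.v *)
From HB Require Import structures.
From mathcomp Require Import all_boot all_order all_algebra.
Unset Printing Implicit Defensive.
Import Order.TTheory GRing.Theory Num.Theory.
Local Open Scope ring_scope.

(* The ring A = k[eps]/(eps^2), elements a + b eps represented as (a, b). *)
Section DualNumbers.
Variable k : fieldType.
Definition dual := (k * k)%type.
Definition zeroA : dual := (0, 0).
Definition oneA : dual := (1, 0).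
Definition epsA : dual := (0, 1).
Definition addA (x y : dual) : dual := (x.1 + y.1, x.2 + y.2).
Definition oppA (x : dual) : dual := (- x.1, - x.2).
Definition mulA (x y : dual) : dual := (x.1 * y.1, x.1 * y.2 + x.2 * y.1).
Definition scaleA (c : k) (x : dual) : dual := (c * x.1, c * x.2).
End DualNumbers.
Arguments addA {k}. Arguments oppA {k}. Arguments mulA {k}. Arguments scaleA {k}.

(* The complexes X_i[a] : A in degrees -i-a, ..., -1-a, differentials eps. *)
(* A morphism of graded modules X -> Y between such complexes is given by *)
(* its components f n : X^n = A -> Y^n = A, i.e. elements of A (A-linear  *)
(* endomorphisms of A are multiplications).                                *)

Definition inX (i : nat) (a : int) (n : int) : bool :=
  (- (i%:Z) - a <= n) && (n <= -1 - a).

Definition dX (k : fieldType) (i : nat) (a : int) (n : int) : dual k :=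
  if inX i a n && inX i a (n + 1) then epsA k else zeroA k.

Definition is_chain (k : fieldType) (i : nat) (a : int) (j : nat) (b : int)
    (f : int -> dual k) : Prop :=
  (forall n, ~~ (inX i a n && inX j b n) -> f n = zeroA k) /\
  (forall n, mulA (dX k j b n) (f n) = mulA (f (n + 1)) (dX k i a n)).

Definition homotopic (k : fieldType) (i : nat) (a : int) (j : nat) (b : int)
    (f g : int -> dual k) : Prop :=
  exists h : int -> dual k,
    (forall n, ~~ (inX i a n && inX j b (n - 1)) -> h n = zeroA k) /\
    (forall n, addA (f n) (oppA (g n)) =
               addA (mulA (dX k j b (n - 1)) (h n)) (mulA (h (n + 1)) (dX k i a n))).

Definition compM (k : fieldType) (g f : int -> dual k) : int -> dual k :=
  fun n => mulA (g n) (f n).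
Definition idM (k : fieldType) (i : nat) (a : int) : int -> dual k :=
  fun n => if inX i a n then oneA k else zeroA k.
Definition scaleM (k : fieldType) (c : k) (f : int -> dual k) : int -> dual k :=
  fun n => scaleA c (f n).
Definition addM (k : fieldType) (f g : int -> dual k) : int -> dual k :=
  fun n => addA (f n) (g n).
(* f : X_i[a] -> X_j[b]  gives  f[1] : X_i[a+1] -> X_j[b+1] *)
Definition shiftM (k : fieldType) (f : int -> dual k) : int -> dual k :=
  fun n => f (n + 1).

Arguments compM {k}. Arguments scaleM {k}. Arguments addM {k}. Arguments shiftM {k}.

(* A functor F on the full subcategory of Perf(A) on the objects X_i[a]
   (i >= 1), fixing every object:  F i a j b f  is F applied to a
   representative f of a morphism X_i[a] -> X_j[b]. *)
Definition FunType (k : fieldType) :=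
  nat -> int -> nat -> int -> (int -> dual k) -> (int -> dual k).

Definition good_functor (k : fieldType) (F : FunType k) : Prop :=
  (forall i a j b f, (0 < i)%N -> (0 < j)%N -> is_chain k i a j b f ->
      is_chain k i a j b (F i a j b f)) /\
  (forall i a j b f g, (0 < i)%N -> (0 < j)%N ->
      is_chain k i a j b f -> is_chain k i a j b g ->
      homotopic k i a j b f g -> homotopic k i a j b (F i a j b f) (F i a j b g)) /\
  (forall i a j b (c : k) f g, (0 < i)%N -> (0 < j)%N ->
      is_chain k i a j b f -> is_chain k i a j b g ->
      homotopic k i a j b (F i a j b (addM (scaleM c f) g))
                          (addM (scaleM c (F i a j b f)) (F i a j b g))) /\
  (forall i a, (0 < i)%N -> homotopic k i a i a (F i a i a (idM k i a)) (idM k i a)) /\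
  (forall i a j b l c f g, (0 < i)%N -> (0 < j)%N -> (0 < l)%N ->
      is_chain k i a j b f -> is_chain k j b l c g ->
      homotopic k i a l c (F i a l c (compM g f))
                          (compM (F j b l c g) (F i a j b f))) /\
  (forall i a j b f, (0 < i)%N -> (0 < j)%N -> is_chain k i a j b f ->
      homotopic k i (a + 1) j (b + 1) (F i (a + 1) j (b + 1) (shiftM f))
                                      (shiftM (F i a j b f))) /\
  (forall i a j b f g, (0 < i)%N -> (0 < j)%N ->
      is_chain k i a j b f -> is_chain k i a j b g ->
      homotopic k i a j b (F i a j b f) (F i a j b g) -> homotopic k i a j b f g) /\
  (forall i a j b g, (0 < i)%N -> (0 < j)%N -> is_chain k i a j b g ->
      exists f, is_chain k i a j b f /\ homotopic k i a j b (F i a j b f) g).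

Definition one_range (i j : nat) (a : int) : bool :=
  (Num.max 0 (i%:Z - j%:Z) <= a) && (a < i%:Z).
Definition eps_range (i j : nat) (a : int) : bool :=
  (- (j%:Z) < a) && (a <= Num.min 0 (i%:Z - j%:Z)).

Definition one_gen (k : fieldType) (i j : nat) (a : int) : int -> dual k :=
  fun n => if inX i 0 n && inX j a n then oneA k else zeroA k.
Definition eps_gen (k : fieldType) (i j : nat) (a : int) : int -> dual k :=
  fun n => if n == -1 then epsA k else zeroA k.

(* kc i j a = k^i_{j[a]} are the coefficients of F:
   F(g) = k^i_{j[a]} g for the generator g when (i-j,a) <> (0,0), and
   F(eps^i_{i[0]}) = k^i_{i[0]} eps^i_{i[0]} (which, with F(id) = id and
   linearity, is F(a id + b eps) = a id + k^i_{i[0]} b eps). *)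
Definition coeffs_of (k : fieldType) (F : FunType k) (kc : nat -> nat -> int -> k) : Prop :=
  (forall i j a, (0 < i)%N -> (0 < j)%N -> one_range i j a ->
      ~ (i = j /\ a = 0) ->
      homotopic k i 0 j a (F i 0 j a (one_gen k i j a)) (scaleM (kc i j a) (one_gen k i j a))) /\
  (forall i j a, (0 < i)%N -> (0 < j)%N -> eps_range i j a ->
      homotopic k i 0 j a (F i 0 j a (eps_gen k i j a)) (scaleM (kc i j a) (eps_gen k i j a))).

(* Main.v *)
Require Import Defs.
From HB Require Import structures.
From mathcomp Require Import all_boot all_order all_algebra zify ring.
From Stdlib Require Import FunctionalExtensionality.
Import Defs.
Set Implicit Arguments.
Unset Strict Implicit.
Import Order.TTheory GRing.Theory Num.Theory.
Local Open Scope ring_scope.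

Definition shiftZ {k : fieldType} (z : int) (f : int -> dual k) : int -> dual k :=
  fun n => f (n + z).

Lemma dual_ext (k : fieldType) (x y : dual k) : x.1 = y.1 -> x.2 = y.2 -> x = y.
Proof. by case: x => ? ?; case: y => ? ? /= -> ->. Qed.

Ltac dualize := rewrite /mulA /addA /oppA /scaleA /epsA /oneA /zeroA; apply: dual_ext => /=.

Lemma mulAC (k : fieldType) (x y : dual k) : mulA x y = mulA y x.
Proof. by dualize; ring. Qed.
Lemma mulAA (k : fieldType) (x y z : dual k) : mulA x (mulA y z) = mulA (mulA x y) z.
Proof. by dualize; ring. Qed.
Lemma mulADr (k : fieldType) (x y z : dual k) : mulA x (addA y z) = addA (mulA x y) (mulA x z).
Proof. by dualize; ring. Qed.
Lemma mulADl (k : fieldType) (x y z : dual k) : mulA (addA y z) x = addA (mulA y x) (mulA z x).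
Proof. by dualize; ring. Qed.
Lemma mulANr (k : fieldType) (x y : dual k) : mulA x (oppA y) = oppA (mulA x y).
Proof. by dualize; ring. Qed.
Lemma mulANl (k : fieldType) (x y : dual k) : mulA (oppA x) y = oppA (mulA x y).
Proof. by dualize; ring. Qed.
Lemma mulAZr (k : fieldType) c (x y : dual k) : mulA x (scaleA c y) = scaleA c (mulA x y).
Proof. by dualize; ring. Qed.
Lemma mulAZl (k : fieldType) c (x y : dual k) : mulA (scaleA c x) y = scaleA c (mulA x y).
Proof. by dualize; ring. Qed.
Lemma mulA0r (k : fieldType) (x : dual k) : mulA x (zeroA k) = zeroA k.
Proof. by dualize; ring. Qed.
Lemma mulA0l (k : fieldType) (x : dual k) : mulA (zeroA k) x = zeroA k.
Proof. by dualize; ring. Qed.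
Lemma scaleA0 (k : fieldType) c : scaleA c (zeroA k) = zeroA k.
Proof. by dualize; ring. Qed.
Lemma scaleAA (k : fieldType) c d (x : dual k) : scaleA c (scaleA d x) = scaleA (c * d) x.
Proof. by dualize; ring. Qed.

Lemma inX_shift i a z n : inX i (a + z) n = inX i a (n + z).
Proof.
rewrite /inX; apply/idP/idP => /andP [H1 H2]; apply/andP; split; lia.
Qed.
Lemma dX_shift (k : fieldType) i a z n : dX k i (a + z) n = dX k i a (n + z).
Proof. by rewrite /dX !inX_shift addrAC. Qed.

Lemma htp_refl (k : fieldType) i a j b (f : int -> dual k) : homotopic k i a j b f f.
Proof.
exists (fun _ => zeroA k); split => // n; dualize; ring.
Qed.

Lemma htp_sym (k : fieldType) i a j b (f g : int -> dual k) :
  homotopic k i a j b f g -> homotopic k i a j b g f.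
Proof.
case=> h [Hs He]; exists (fun n => oppA (h n)); split.
  by move=> n /Hs ->; dualize; ring.
move=> n; move: (He n); rewrite /mulA /addA /oppA.
move: (f n) (g n) (h n) (h (n + 1)) (dX k j b (n - 1)) (dX k i a n) =>
  [a1 a2] [b1 b2] [c1 c2] [e1 e2] [p1 p2] [q1 q2] /= [E1 E2].
move/eqP: E1; rewrite subr_eq => /eqP E1; move/eqP: E2; rewrite subr_eq => /eqP E2.
subst a1 a2; apply: dual_ext => /=; ring.
Qed.

Lemma htp_trans (k : fieldType) i a j b (f g l : int -> dual k) :
  homotopic k i a j b f g -> homotopic k i a j b g l -> homotopic k i a j b f l.
Proof.
case=> h [Hs He]; case=> h' [Hs' He']; exists (fun n => addA (h n) (h' n)); split.
  by move=> n H; rewrite (Hs _ H) (Hs' _ H); dualize; ring.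
move=> n; move: (He n) (He' n); rewrite /mulA /addA /oppA.
move: (f n) (g n) (l n) (h n) (h (n + 1)) (h' n) (h' (n + 1)) (dX k j b (n - 1)) (dX k i a n) =>
  [a1 a2] [b1 b2] [c1 c2] [e1 e2] [r1 r2] [s1 s2] [t1 t2] [p1 p2] [q1 q2] /= [E1 E2] [E3 E4].
move/eqP: E1; rewrite subr_eq => /eqP E1; move/eqP: E2; rewrite subr_eq => /eqP E2.
move/eqP: E3; rewrite subr_eq => /eqP E3; move/eqP: E4; rewrite subr_eq => /eqP E4.
subst a1 a2 b1 b2; apply: dual_ext => /=; ring.
Qed.

Lemma htp_scale (k : fieldType) i a j b c (f g : int -> dual k) :
  homotopic k i a j b f g -> homotopic k i a j b (scaleM c f) (scaleM c g).
Proof.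
case=> h [Hs He]; exists (fun n => scaleA c (h n)); split.
  by move=> n /Hs ->; dualize; ring.
move=> n; move: (He n); rewrite /scaleM /mulA /addA /oppA /scaleA.
move: (f n) (g n) (h n) (h (n + 1)) (dX k j b (n - 1)) (dX k i a n) =>
  [a1 a2] [b1 b2] [c1 c2] [e1 e2] [p1 p2] [q1 q2] /= [E1 E2].
move/eqP: E1; rewrite subr_eq => /eqP E1; move/eqP: E2; rewrite subr_eq => /eqP E2.
subst a1 a2; apply: dual_ext => /=; ring.
Qed.

Lemma htp_shift (k : fieldType) i a j b z (f g : int -> dual k) :
  homotopic k i a j b f g -> homotopic k i (a + z) j (b + z) (shiftZ z f) (shiftZ z g).
Proof.
case=> h [Hs He]; exists (shiftZ z h); split.
  move=> n H; rewrite /shiftZ Hs //; move: H; rewrite !inX_shift.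
  by rewrite addrAC.
move=> n; rewrite /shiftZ !dX_shift He; congr addA; [|by rewrite addrAC].
by rewrite addrAC.
Qed.

Lemma chain_shift (k : fieldType) i a j b z (f : int -> dual k) :
  is_chain k i a j b f -> is_chain k i (a + z) j (b + z) (shiftZ z f).
Proof.
case=> Hs He; split.
  by move=> n H; rewrite /shiftZ Hs // -!inX_shift.
by move=> n; rewrite /shiftZ !dX_shift He addrAC.
Qed.

Lemma chain_scale (k : fieldType) i a j b c (f : int -> dual k) :
  is_chain k i a j b f -> is_chain k i a j b (scaleM c f).
Proof.
case=> Hs He; split.
  by move=> n H; rewrite /scaleM Hs // scaleA0.
by move=> n; rewrite /scaleM mulAZr mulAZl He.
Qed.

Lemma chain_comp (k : fieldType) i a j b l c (f g : int -> dual k) :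
  is_chain k i a j b f -> is_chain k j b l c g -> is_chain k i a l c (compM g f).
Proof.
case=> Hs He; case=> Hs' He'; split.
  move=> n; rewrite /compM negb_and => /orP [H|H].
    case E: (inX j b n); last by rewrite Hs ?mulA0r // E andbF.
    by rewrite Hs ?mulA0r // (negbTE H).
  case E: (inX j b n); last by rewrite Hs ?mulA0r // E andbF.
  by rewrite Hs' ?mulA0l // (negbTE H) andbF.
by move=> n; rewrite /compM mulAA He' -mulAA He mulAA.
Qed.

Lemma htp_compl (k : fieldType) i a j b l c (f f' g : int -> dual k) :
  is_chain k j b l c g -> homotopic k i a j b f f' ->
  homotopic k i a l c (compM g f) (compM g f').
Proof.
case=> Hsg Heg; case=> h [Hs He]; exists (fun n => mulA (g (n - 1)) (h n)); split.
  move=> n; rewrite negb_and => /orP [H|H].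
    by rewrite Hs ?mulA0r // (negbTE H).
  case E: (inX j b (n - 1)); last by rewrite Hsg ?mulA0l // E.
  by rewrite Hsg ?mulA0l // (negbTE H) andbF.
move=> n; rewrite /compM -mulANr -mulADr He mulADr !mulAA; congr addA.
  by rewrite Heg subrK.
by rewrite addrK.
Qed.

Lemma htp_compr (k : fieldType) i a j b l c (f g g' : int -> dual k) :
  is_chain k i a j b f -> homotopic k j b l c g g' ->
  homotopic k i a l c (compM g f) (compM g' f).
Proof.
case=> Hsf Hef; case=> h [Hs He]; exists (fun n => mulA (h n) (f n)); split.
  move=> n; rewrite negb_and => /orP [H|H].
    by rewrite Hsf ?mulA0r // (negbTE H).
  case E: (inX j b n); last by rewrite Hsf ?mulA0r // E andbF.
  by rewrite Hs ?mulA0l // E (negbTE H).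
move=> n; rewrite /compM -mulANl -mulADl He mulADl -!mulAA; congr addA.
by rewrite Hef.
Qed.

Lemma dX1 (k : fieldType) i a n : (dX k i a n).1 = 0.
Proof. by rewrite /dX; case: ifP. Qed.

Ltac case_gen := repeat (case: ifP => ?); rewrite /mulA /epsA /oneA /zeroA /=;
  first [ by apply: dual_ext => /=; ring | exfalso; lia ].

Lemma chain_one (k : fieldType) i j a : (0 < i)%N -> (0 < j)%N -> one_range i j a ->
  is_chain k i 0 j a (one_gen k i j a).
Proof.
move=> Hi Hj Hr; split; first by rewrite /one_gen => n /negbTE ->.
move: Hr; rewrite /one_range => Hr n; rewrite /one_gen /dX /inX; case_gen.
Qed.

Lemma chain_eps (k : fieldType) i j a : (0 < i)%N -> (0 < j)%N -> eps_range i j a ->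
  is_chain k i 0 j a (eps_gen k i j a).
Proof.
move=> Hi Hj Hr; split.
  move=> n; rewrite /eps_gen; case: eqP => // -> H; exfalso; move/negP: H; apply.
  move: Hr; rewrite /eps_range /inX; lia.
move: Hr; rewrite /eps_range => Hr n; rewrite /eps_gen /dX /inX; case_gen.
Qed.

Lemma comp_R1 (k : fieldType) i j l al be :
  (0 < i)%N -> (0 < j)%N -> (0 < l)%N ->
  one_range i j al -> one_range j l be -> one_range i l (al + be) ->
  compM (shiftZ al (one_gen k j l be)) (one_gen k i j al) = one_gen k i l (al + be).
Proof.
move=> Hi Hj Hl H1 H2 H3; apply: functional_extensionality => n.
move: H1 H2 H3; rewrite /one_range /compM /shiftZ /one_gen /inX => H1 H2 H3; case_gen.
Qed.

Lemma comp_R3 (k : fieldType) i j al :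
  (0 < i)%N -> (0 < j)%N -> eps_range i j al ->
  compM (shiftZ al (one_gen k j i (- al))) (eps_gen k i j al) = eps_gen k i i 0.
Proof.
move=> Hi Hj H1; apply: functional_extensionality => n.
move: H1; rewrite /eps_range /compM /shiftZ /one_gen /eps_gen /inX => H1; case_gen.
Qed.

Lemma nd_one (k : fieldType) i l g c c' : (0 < i)%N -> (0 < l)%N -> one_range i l g ->
  homotopic k i 0 l g (scaleM c (one_gen k i l g)) (scaleM c' (one_gen k i l g)) -> c = c'.
Proof.
move=> Hi Hl Hr [h [_ He]]; move: (He (-1 - g)) => /(congr1 fst).
rewrite /scaleM /one_gen /= !dX1 (_ : inX i 0 (-1 - g) && inX l g (-1 - g) = true).
  by rewrite /= !mulr1 !mul0r mulr0 addr0 => /eqP; rewrite subr_eq0 => /eqP.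
by move: Hr; rewrite /one_range /inX; lia.
Qed.

Lemma nd_eps (k : fieldType) i c c' : (0 < i)%N ->
  homotopic k i 0 i 0 (scaleM c (eps_gen k i i 0)) (scaleM c' (eps_gen k i i 0)) -> c = c'.
Proof.
move=> Hi [h [Hs He]].
have Q : forall m : nat, (m < i)%N -> (h (- i%:Z + m%:Z)).1 = 0.
  elim=> [|m IH] Hm.
    by rewrite Hs //; apply/negP; rewrite /inX; lia.
  move: (He (- i%:Z + m%:Z)) => /(congr1 snd).
  rewrite /scaleM /eps_gen /= (_ : (- i%:Z + m%:Z == -1) = false); last by lia.
  rewrite IH; last by lia.
  rewrite (_ : dX k i 0 (- i%:Z + m%:Z) = epsA k); last first.
    by rewrite /dX /inX; case: ifP => //; lia.
  rewrite !dX1 /= (_ : - i%:Z + m%:Z + 1 = - i%:Z + m.+1%:Z); last by lia.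
  by rewrite !(mulr0, mul0r, mulr1, add0r, addr0, subrr, oppr0) => E; rewrite -E.
have Hi' : (i.-1 < i)%N by lia.
move: (Q i.-1 Hi'); rewrite (_ : - i%:Z + i.-1%:Z = -1); last by lia.
move=> Q1; move: (He (-1)) => /(congr1 snd).
rewrite /scaleM /eps_gen /= Q1 (_ : -1 + 1 = 0 :> int) // (Hs 0); last first.
  by rewrite /inX; apply/negP => ?; lia.
rewrite !dX1 /= !(mulr0, mul0r, mulr1, add0r, addr0) => /eqP; rewrite subr_eq0.
by move/eqP.
Qed.

Lemma F_shiftN (k : fieldType) (F : FunType k) (HF : good_functor k F) i a j b
    (f : int -> dual k) (m : nat) : (0 < i)%N -> (0 < j)%N -> is_chain k i a j b f ->
  homotopic k i (a + m%:Z) j (b + m%:Z) (F i (a + m%:Z) j (b + m%:Z) (shiftZ m%:Z f))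
    (shiftZ m%:Z (F i a j b f)).
Proof.
case: HF => Hch [Hwd [Hlin [Hid [Hcomp [Hsh [Hfaith Hfull]]]]]] Hi Hj Hf.
elim: m => [|m IH].
  rewrite !addr0 (_ : shiftZ 0 f = f); last first.
    by apply: functional_extensionality => n; rewrite /shiftZ addr0.
  rewrite (_ : shiftZ 0 (F i a j b f) = F i a j b f); first exact: htp_refl.
  by apply: functional_extensionality => n; rewrite /shiftZ addr0.
have E1 : forall g : int -> dual k, shiftZ m.+1%:Z g = shiftM (shiftZ m%:Z g).
  by move=> g; apply: functional_extensionality => n; rewrite /shiftZ /shiftM; congr g; lia.
rewrite !E1 (_ : a + m.+1%:Z = a + m%:Z + 1); last by lia.
rewrite (_ : b + m.+1%:Z = b + m%:Z + 1); last by lia.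
apply: htp_trans (Hsh _ _ _ _ _ Hi Hj (chain_shift m%:Z Hf)) _.
exact: (htp_shift 1 IH).
Qed.

Lemma F_shiftZ (k : fieldType) (F : FunType k) (HF : good_functor k F) i a j b
    (f : int -> dual k) (z : int) : (0 < i)%N -> (0 < j)%N -> is_chain k i a j b f ->
  homotopic k i (a + z) j (b + z) (F i (a + z) j (b + z) (shiftZ z f))
    (shiftZ z (F i a j b f)).
Proof.
move=> Hi Hj Hf; case: z => [m|m]; first exact: F_shiftN.
set z := Negz m.
have H := F_shiftN HF m.+1 Hi Hj (chain_shift z Hf).
have Ez : forall x : int, x + z + m.+1%:Z = x by move=> x; rewrite /z; lia.
rewrite !Ez (_ : shiftZ m.+1%:Z (shiftZ z f) = f) in H; last first.
  by apply: functional_extensionality => n; rewrite /shiftZ; congr f; rewrite /z; lia.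
apply: htp_sym; move: (htp_shift z H).
rewrite (_ : shiftZ z (shiftZ m.+1%:Z (F i (a + z) j (b + z) (shiftZ z f))) =
             F i (a + z) j (b + z) (shiftZ z f)) //.
by apply: functional_extensionality => n; rewrite /shiftZ; congr F; rewrite /z; lia.
Qed.

Lemma comp_coef (k : fieldType) (F : FunType k) (HF : good_functor k F) i j l al be
    (f g0 gen : int -> dual k) c1 c2 c :
  (0 < i)%N -> (0 < j)%N -> (0 < l)%N ->
  is_chain k i 0 j al f -> is_chain k j 0 l be g0 ->
  compM (shiftZ al g0) f = gen ->
  homotopic k i 0 j al (F i 0 j al f) (scaleM c1 f) ->
  homotopic k j 0 l be (F j 0 l be g0) (scaleM c2 g0) ->
  homotopic k i 0 l (al + be) (F i 0 l (al + be) gen) (scaleM c gen) ->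
  homotopic k i 0 l (al + be) (scaleM c gen) (scaleM (c2 * c1) gen).
Proof.
move=> Hi Hj Hl Hf Hg Egen H1 H2 H3.
have HF' := HF.
case: HF' => Hch [Hwd [Hlin [Hid [Hcomp [Hsh [Hfaith Hfull]]]]]].
have E : forall x : int, x + al = al + x by move=> x; rewrite addrC.
have Hsg : is_chain k j al l (al + be) (shiftZ al g0).
  by have := chain_shift al Hg; rewrite add0r E.
have T1 := F_shiftZ HF al Hj Hl Hg; rewrite add0r E in T1.
have T2 := htp_shift al H2; rewrite add0r E in T2.
have Hc := Hcomp _ _ _ _ _ _ _ _ Hi Hj Hl Hf Hsg; rewrite Egen in Hc.
apply: htp_trans (htp_sym H3) _.
apply: htp_trans Hc _.
apply: htp_trans (htp_compr (Hch _ _ _ _ _ Hi Hj Hf) T1) _.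
apply: htp_trans (htp_compr (Hch _ _ _ _ _ Hi Hj Hf) T2) _.
have Hsg2 : is_chain k j al l (al + be) (shiftZ al (scaleM c2 g0)).
  by have := chain_shift al (chain_scale c2 Hg); rewrite add0r E.
apply: htp_trans (htp_compl Hsg2 H1) _.
rewrite (_ : compM (shiftZ al (scaleM c2 g0)) (scaleM c1 f) = scaleM (c2 * c1) gen);
  first exact: htp_refl.
apply: functional_extensionality => n; rewrite -Egen /compM /shiftZ /scaleM.
by rewrite mulAZl mulAZr scaleAA.
Qed.

Lemma rel1 (k : fieldType) (F : FunType k) kc (HF : good_functor k F) (Hkc : coeffs_of k F kc)
    i j l al be :
  (0 < i)%N -> (0 < j)%N -> (0 < l)%N ->
  one_range i j al -> one_range j l be -> one_range i l (al + be) ->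
  ~ (i = j /\ al = 0) -> ~ (j = l /\ be = 0) -> ~ (i = l /\ al + be = 0) ->
  kc i l (al + be) = kc j l be * kc i j al.
Proof.
move=> Hi Hj Hl R1 R2 R3 N1 N2 N3; case: Hkc => Ho He.
apply: (nd_one Hi Hl R3).
apply: (comp_coef HF Hi Hj Hl (chain_one k Hi Hj R1) (chain_one k Hj Hl R2)
          (comp_R1 k Hi Hj Hl R1 R2 R3)); by apply: Ho.
Qed.

Lemma rel3 (k : fieldType) (F : FunType k) kc (HF : good_functor k F) (Hkc : coeffs_of k F kc)
    i j al :
  (0 < i)%N -> (0 < j)%N -> eps_range i j al -> ~ (j = i /\ - al = 0) ->
  kc i i 0 = kc j i (- al) * kc i j al.
Proof.
move=> Hi Hj R N; case: Hkc => Ho He.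
have R2 : one_range j i (- al) by move: R; rewrite /eps_range /one_range; lia.
have R0 : eps_range i i 0 by rewrite /eps_range; lia.
apply: (nd_eps Hi).
have H3 : homotopic k i 0 i (al + - al) (F i 0 i (al + - al) (eps_gen k i i 0))
            (scaleM (kc i i 0) (eps_gen k i i 0)) by rewrite subrr; apply: He.
have := comp_coef HF Hi Hj Hi (chain_eps k Hi Hj R) (chain_one k Hj Hi R2)
          (comp_R3 k Hi Hj R) (He _ _ _ Hi Hj R) (Ho _ _ _ Hj Hi R2 N) H3.
by rewrite subrr.
Qed.

Unset Implicit Arguments.
Unset Strict Implicit.

Theorem theorem5p10 (k : fieldType) (F : FunType k) (kc : nat -> nat -> int -> k)
    (HF : good_functor k F) (Hkc : coeffs_of k F kc)
    (C1 : forall i : nat, (1 <= i)%N -> kc i i 0 = 1)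
    (C2 : forall i : nat, (2 <= i)%N -> kc i.-1 i 0 = 1) :
  forall (i j : nat) (a : int), (1 <= i)%N -> (1 <= j)%N ->
    eps_range i j a || one_range i j a ->
    kc i j a = (kc 2%N 1%N 1) ^ a.
Proof.
set lam := kc 2%N 1%N 1.
have A : forall d i : nat, (1 <= i)%N -> kc i (i + d.+1)%N 0 = 1.
{ elim=> [|d IH] i Hi.
    by have := C2 i.+1 Hi; rewrite addn1.
  have := @rel1 k F kc HF Hkc i (i + d.+1)%N (i + d.+2)%N 0 0.
  rewrite addr0 => ->.
  - rewrite IH // (_ : (i + d.+2)%N = (i + d.+1).+1)%N; last by lia.
    by rewrite (C2 (i + d.+1).+1) ?mulr1 //; lia.
  all: rewrite /one_range; lia. }
have A' : forall i j : nat, (1 <= i)%N -> (i < j)%N -> kc i j 0 = 1.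
{ move=> i j Hi Hij; rewrite (_ : j = i + (j - i).-1.+1)%N; [exact: A | lia]. }
have M : forall d : nat, kc d.+2 d.+1 1 = lam.
{ elim=> [|d IH] //.
  have E1 := @rel1 k F kc HF Hkc d.+2 d.+3 d.+2 0 1.
  have E2 := @rel1 k F kc HF Hkc d.+2 d.+1 d.+2 1 0.
  rewrite add0r A' // mulr1 in E1; rewrite addr0 A' // mul1r IH in E2.
  rewrite -E1 ?E2 //; rewrite /one_range; lia. }
have U : forall (m i j : nat), (0 < i)%N -> (0 < j)%N -> one_range i j m%:Z ->
    ~ (i = j /\ m%:Z = 0) -> kc i j m%:Z = lam ^+ m.
{ elim=> [|m IH] i j Hi Hj R N.
    by rewrite A' //; move: R N; rewrite /one_range; lia.
  have [d Hd] : exists d, i = d.+2 by exists i.-2; move: R; rewrite /one_range; lia.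
  subst i.
  case: (boolP ((m == 0%N) && (j == d.+1))) => [/andP [/eqP Hm /eqP Hj']|Hn].
    by subst; rewrite M expr1.
  have R1 : one_range d.+2 d.+1 1 by rewrite /one_range; lia.
  have R2 : one_range d.+1 j m by move: R; rewrite /one_range; lia.
  have R3 : one_range d.+2 j (1 + m%:Z) by move: R; rewrite /one_range; lia.
  have N1 : ~ (d.+2 = d.+1 /\ (1 : int) = 0) by lia.
  have N2 : ~ (d.+1 = j /\ m%:Z = 0) by move: Hn; lia.
  have N3 : ~ (d.+2 = j /\ 1 + m%:Z = 0) by lia.
  have E := @rel1 k F kc HF Hkc d.+2 d.+1 j 1 m Hi (ltn0Sn d) Hj R1 R2 R3 N1 N2 N3.
  rewrite M (IH _ _ (ltn0Sn d) Hj R2 N2) in E.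
  by rewrite (_ : Posz m.+1 = 1 + m%:Z) ?E ?exprSr //; lia. }
move=> i j a Hi Hj /orP [R|R].
- case: (boolP ((i == j) && (a == 0))) => [/andP [/eqP <- /eqP ->]|Hn].
    by rewrite C1 // expr0z.
  have [m Hm] : exists m : nat, a = - m%:Z.
    by exists `|a|%N; move: R; rewrite /eps_range; lia.
  subst a.
  have N : ~ (j = i /\ - - m%:Z = 0) by move: Hn; lia.
  have E := @rel3 k F kc HF Hkc i j (- m%:Z) Hi Hj R N.
  have R' : one_range j i m by move: R; rewrite /eps_range /one_range; lia.
  have N' : ~ (j = i /\ m%:Z = 0) by move: Hn; lia.
  rewrite opprK C1 // (U _ _ _ Hj Hi R' N') in E.
  have H0 : lam ^+ m != 0.
    by apply/eqP => H0; move: E; rewrite H0 mul0r => /eqP; rewrite oner_eq0.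
  by rewrite -exprnN -(mulKf H0 (kc i j (- m%:Z))) -E mulr1.
- case: (boolP ((i == j) && (a == 0))) => [/andP [/eqP <- /eqP ->]|Hn].
    by rewrite C1 // expr0z.
  have [m Hm] : exists m : nat, a = m%:Z.
    by exists `|a|%N; move: R; rewrite /one_range; lia.
  subst a; rewrite U // -?exprnP //; move: Hn; lia.
Qed.
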